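(* There exists a locally compact groupoid $G$ over a base space $X$, with $G$ even compact, whose range map $r:G\to X$ is open, but such that $G$ admits no Haar system.
   Context: A groupoid over a set $X$ is a small category with object set $X$ in which every arrow is invertible; $G$ denotes its set of arrows, with range and source maps $r,s:G\to X$, identity map $\varepsilon:X\to G$, composition $m$ defined on the set $G^{(2)}=\{(\alpha,\beta)\in G\times G: s(\alpha)=r(\beta)\}$ of composable pairs, and inversion $\iota$. A topological groupoid is a groupoid with topologies on $G$ and $X$ making $r,s,\varepsilon,m,\iota$ continuous ($G^{(2)}$ carries the subspace topology of $G\times G$). A locally compact groupoid is a topological groupoid in which $G$ and $X$ are locally compact Hausdorff spaces. For $x\in X$ write $G^x=\{g\in G: r(g)=x\}$ and $G_y^x=\{g\in G: s(g)=y,\ r(g)=x\}$. A Haar system on a locally compact groupoid $G$ is a family $(\mu^x)_{x\in X}$ of Radon measures on $G$ such that (a) $\operatorname{supp}(\mu^x)=G^x$ for every $x\in X$; (b) $\int_G\phi(\alpha g)\,d\mu^{y}(g)=\int_G\phi(g)\,d\mu^{x}(g)$ for every $\phi\in C_c(G)$ and every $\alpha\in G_y^x$; (c) for every $\phi\in C_c(G)$ the map $x\mapsto\int_G\phi(g)\,d\mu^x(g)$ is continuous on $X$. *)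

(* Defs.v *)
From HB Require Import structures.
From mathcomp Require Import all_boot all_order all_algebra.
From mathcomp Require Import all_classical all_reals all_analysis.
From mathcomp Require Import Rstruct Rstruct_topology.
From Stdlib Require Import Rdefinitions.

Set Implicit Arguments.
Unset Strict Implicit.
Unset Printing Implicit Defensive.

Import Order.TTheory GRing.Theory Num.Theory.
Local Open Scope classical_set_scope.
Local Open Scope ring_scope.

Notation RR := Rdefinitions.R.

Definition Borel (T : ptopologicalType) := g_sigma_algebraType (@open T).

Notation borel_measure T := {measure set (Borel T) -> \bar RR}.

Definition radon (T : ptopologicalType) (mu : borel_measure T) : Prop :=
  [/\ (forall K : set T, compact K -> (mu K < +oo)%E),
      (forall E : set (Borel T), measurable E ->
         mu E = ereal_inf [set mu U | U in [set U : set T | open U /\ E `<=` U]]) &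
      (forall U : set T, open U ->
         mu U = ereal_sup [set mu K | K in [set K : set T | compact K /\ K `<=` U]])].

Definition msupport (T : ptopologicalType) (mu : borel_measure T) : set T :=
  [set g | forall U : set T, open U -> U g -> (0 < mu U)%E].

Definition Cc (T : ptopologicalType) (phi : T -> RR) : Prop :=
  continuous phi /\ compact (closure [set t | phi t != 0]).

(* Topological groupoid with arrow space G and object space X:
   range r, source s, identity map e, composition m (only meaningful on
   composable pairs G^(2) = {(a,b) | s a = r b}), inversion i. *)
Definition groupoid (G X : Type) (r s : G -> X) (e : X -> G)
    (m : G -> G -> G) (i : G -> G) : Prop :=
  [/\ (forall a b, s a = r b -> r (m a b) = r a /\ s (m a b) = s b),
      (forall a b c, s a = r b -> s b = r c -> m (m a b) c = m a (m b c)),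
      (forall x, r (e x) = x /\ s (e x) = x),
      (forall g, m (e (r g)) g = g /\ m g (e (s g)) = g) &
      (forall g, r (i g) = s g /\ s (i g) = r g /\
                 m g (i g) = e (r g) /\ m (i g) g = e (s g))].

Definition topological_groupoid (G X : ptopologicalType) (r s : G -> X)
    (e : X -> G) (m : G -> G -> G) (i : G -> G) : Prop :=
  groupoid r s e m i /\ continuous r /\ continuous s /\ continuous e /\
  {within [set p : G * G | s p.1 = r p.2], continuous (fun p => m p.1 p.2)} /\
  continuous i.

Definition locally_compact_groupoid (G X : ptopologicalType) (r s : G -> X)
    (e : X -> G) (m : G -> G -> G) (i : G -> G) : Prop :=
  [/\ topological_groupoid r s e m i,
      hausdorff_space G, locally_compact [set: G],
      hausdorff_space X & locally_compact [set: X]].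

Definition open_map (A B : topologicalType) (f : A -> B) : Prop :=
  forall U : set A, open U -> open (f @` U).

Definition haar_system (G X : ptopologicalType) (r s : G -> X)
    (m : G -> G -> G) (mu : X -> borel_measure G) : Prop :=
  [/\ (forall x, radon (mu x)),
      (forall x, msupport (mu x) = [set g | r g = x]),
      (forall (phi : G -> RR) (a : G), Cc phi ->
         (\int[mu (s a)]_g (phi (m a g))%:E = \int[mu (r a)]_g (phi g)%:E)%E) &
      (forall phi : G -> RR, Cc phi ->
         continuous (fun x => fine (\int[mu x]_g (phi g)%:E)%E))].

(* Main.v *)
Require Import Defs.
From HB Require Import structures.
From mathcomp Require Import all_boot all_order all_algebra.
From mathcomp Require Import all_classical all_reals all_analysis.
From mathcomp Require Import Rstruct Rstruct_topology.
Local Open Scope classical_set_scope.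

Notation D := (discrete_topology (set nat)).
Definition Xo := one_point_compactification D.
HB.instance Definition _ := Topological.on Xo.
HB.instance Definition _ := Pointed.on Xo.
Definition Gp := (Xo * Xo)%type.
HB.instance Definition _ := Topological.on Gp.
HB.instance Definition _ := Pointed.on Gp.

Lemma lcD : locally_compact [set: D].
Proof.
move=> x _; rewrite withinET; exists [set x].
  exact: discrete_set1.
split; [exact: compact_set1 | exact: discrete_closed].
Qed.

Lemma hausD : hausdorff_space D.
Proof. exact: discrete_hausdorff. Qed.

Lemma hausX : hausdorff_space Xo.
Proof. exact: one_point_compactification_hausdorff lcD hausD. Qed.

Lemma cptX : compact [set: Xo].
Proof. exact: one_point_compactification_compact. Qed.

Lemma cptG : compact [set: Gp].
Proof. rewrite -setXTT. exact: compact_setX cptX cptX. Qed.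

Lemma lc_of_cpt (T : topologicalType) : compact [set: T] -> locally_compact [set: T].
Proof.
move=> cT x _; rewrite withinET; exists setT; first exact: filterT.
by split => //; exact: closedT.
Qed.

Lemma hausG : hausdorff_space Gp.
Proof.
move=> [p1 p2] [q1 q2] /= cl.
have h1 : p1 = q1.
  apply: hausX => A B nA nB.
  have := cl (A `*` setT) (B `*` setT).
  case.
  - exists (A, setT) => //; split => //=; exact: filterT.
  - exists (B, setT) => //; split => //=; exact: filterT.
  by move=> [a b] [[/= Aa _] [/= Ba _]]; exists a.
have h2 : p2 = q2.
  apply: hausX => A B nA nB.
  have := cl (setT `*` A) (setT `*` B).
  case.
  - exists (setT, A) => //; split => //=; exact: filterT.
  - exists (setT, B) => //; split => //=; exact: filterT.
  by move=> [a b] [[/= _ Aa] [/= _ Ba]]; exists b.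
by rewrite h1 h2.
Qed.
Definition rr (g : Gp) : Xo := g.1.
Definition ss (g : Gp) : Xo := g.2.
Definition ee (x : Xo) : Gp := (x, x).
Definition mm (a b : Gp) : Gp := (a.1, b.2).
Definition ii (a : Gp) : Gp := (a.2, a.1).

Lemma grpd : groupoid rr ss ee mm ii.
Proof.
split.
- by move=> [? ?] [? ?].
- by move=> [? ?] [? ?] [? ?].
- by [].
- by move=> [? ?].
- by move=> [? ?].
Qed.

Lemma cont_rr : continuous rr.
Proof. move=> p; exact: cvg_fst. Qed.
Lemma cont_ss : continuous ss.
Proof. move=> p; exact: cvg_snd. Qed.
Lemma cont_ee : continuous ee.
Proof.
move=> x.
move=> A [[B C] [/= nB nC] BCA].
apply: filterS (filterI nB nC) => y [By Cy]; exact: BCA.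
Qed.
Lemma cont_ii : continuous ii.
Proof.
move=> p A [[B C] [/= nB nC] BCA].
exists (C, B) => //= -[y1 y2] [/= Cy By]; exact: BCA.
Qed.
Lemma cont_mm : continuous (fun p : Gp * Gp => mm p.1 p.2).
Proof.
move=> p A [[B C] [/= nB nC] BCA].
exists ((B `*` setT), (setT `*` C)).
  split; [exists (B, setT) | exists (setT, C)] => //; split => //; exact: filterT.
move=> [[a1 a2] [b1 b2]] [/= [/= Ba _] [/= _ Cb]]; exact: BCA.
Qed.

Lemma open_rr : open_map rr.
Proof.
move=> U oU; rewrite openE => x [g Ug <-].
have : nbhs g U by exact: open_nbhs_nbhs.
case=> [[B C] [/= nB nC] BCU].
apply: filterS nB => b Bb; exists (b, g.2) => //.
apply: BCU; split => //=; exact: nbhs_singleton.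
Qed.
Lemma setnat_uncountable : ~ countable [set: set nat].
Proof.
move=> /pcard_geP [g].
have := @surj _ _ _ _ g [set k | ~ g k k] I.
case=> k _ gk.
have : g k k <-> ~ g k k by rewrite {1}gk.
by tauto.
Qed.

Local Open Scope ring_scope.
Import Order.TTheory GRing.Theory Num.Theory.

Lemma no_haar (mu : Xo -> borel_measure Gp) : ~ haar_system rr ss mm mu.
Proof.
move=> [rad supp _ _].
pose nu := mu None.
have [finK _ _] := rad None.
have fin : (nu [set: Gp] < +oo)%E := finK _ cptG.
pose U (d : D) : set Gp := [set g : Gp | g.2 = Some d].
have oU d : open (U d).
  rewrite openE => g Ug; rewrite /interior.
  exists (setT, Some @` [set d]) => /=.
    split; first exact: filterT.
    rewrite Ug; apply: one_point_compactification_some_nbhs; exact: discrete_set1.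
  by move=> [g1 g2] [_ /= [e -> <-]].
have mU d : @measurable _ (Borel Gp) (U d).
  exact: sub_sigma_algebra.
have pos d : (0 < nu (U d))%E.
  have : msupport nu (None, Some d) by rewrite supp.
  by apply => //.
have le d : (nu (U d) <= nu setT)%E.
  apply: le_measure; rewrite ?inE //; exact: measurableT.
pose S (n : nat) : set D := [set d | ((n.+1%:R)^-1)%:E < nu (U d)]%E.
have cov : [set: D] `<=` \bigcup_(n in [set: nat]) S n.
  move=> d _; have := pos d; rewrite /S.
  case E: (nu (U d)) => [r| |] //=.
  - rewrite lte_fin => r0.
    exists (Num.Def.trunc r^-1) => //=.
    rewrite /= E lte_fin -invf_plt ?posrE ?invr_gt0 //.
    exact: truncnS_gt.
  - by move=> _; exists 0%N => //=; rewrite E ltry.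
have finS n : finite_set (S n).
  apply/finite_setPn => /pcard_leP /injfunPex [f fS finj].
  pose cT := fine (nu setT).
  have ncT : nu setT = cT%:E.
    rewrite fineK // ge0_fin_numE //; exact: measure_ge0.
  pose N := (n.+1 * (Num.Def.trunc cT).+1)%N.
  pose F k := U (f k).
  have tr : trivIset `I_N F.
    move=> i j _ _ [g [/= e1 e2]]; apply: finj; rewrite ?inE //.
    by move: e1 e2; rewrite /F /U /= => -> [].
  have meq := @measure_semi_additive_ord_I _ _ _ nu F N (fun k _ => mU _) tr
    (bigsetU_measurable _ (fun k _ => mU _)).
  have h1 : (\sum_(i < N) ((n.+1%:R)^-1)%:E <= \sum_(i < N) nu (F i))%E.
    by apply: lee_sum => i _; apply: ltW; exact: fS.
  have h2 : (nu (\big[setU/set0]_(i < N) F i) <= nu setT)%E.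
    apply: le_measure => //; rewrite inE //.
    exact: (bigsetU_measurable _ (fun k _ => mU _)).
  rewrite sumr_const cardT size_enum_ord in h1.
  have eN : (((n.+1%:R^-1)%:E *+ N)%R = ((n.+1%:R^-1 : RR) *+ N)%:E)%E.
    by rewrite EFin_natmul.
  rewrite eN -meq in h1.
  have := le_trans h1 h2; rewrite ncT lee_fin.
  apply/negP; rewrite -ltNge.
  rewrite /N -(mulr_natr (n.+1%:R^-1)) natrM mulrA mulVf ?mul1r; last by rewrite pnatr_eq0.
  exact: truncnS_gt.
apply: setnat_uncountable.
apply: (sub_countable (subset_card_le cov)).
apply: bigcup_countable => [|n _]; first exact: countableP.
exact: finite_set_countable.
Qed.

Theorem proposition2p2 :
  exists (G X : ptopologicalType) (r s : G -> X) (e : X -> G)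
         (m : G -> G -> G) (i : G -> G),
    [/\ locally_compact_groupoid r s e m i,
        compact [set: G],
        open_map r &
        ~ (exists mu : X -> borel_measure G, haar_system r s m mu)].
Proof.
exists Gp, Xo, rr, ss, ee, mm, ii; split.
- split.
  + split; first exact: grpd.
    split; first exact: cont_rr.
    split; first exact: cont_ss.
    split; first exact: cont_ee.
    split; last exact: cont_ii.
    exact: continuous_subspaceT cont_mm.
  + exact: hausG.
  + exact: lc_of_cpt cptG.
  + exact: hausX.
  + exact: lc_of_cpt cptX.
- exact: cptG.
- exact: open_rr.
- move=> [mu H]; apply: (no_haar mu); exact H.
Qed.
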